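(* The matrices $C_1$ and $C_2$ are not zero divisors in $F$; that is, for $A\in F$, each of $C_1A=0$, $AC_1=0$, $C_2A=0$, $AC_2=0$ implies $A=0$.
   Context: $K$ is an infinite field of characteristic different from 2. Let $X=\{x_1,x_2,x_1',x_2'\}$ and $Y=\{y_1,y_2,y_1',y_2'\}$, and let $K[X;Y]\cong K[X]\otimes_K E(Y)$ be the free supercommutative algebra: the $x$'s are even commuting variables, the $y$'s are odd and pairwise anticommuting ($y y=0$ for each odd generator), and $E(Y)$ is the Grassmann algebra on the vector space with basis $Y$. Put $C_1=\begin{pmatrix} x_1&y_1\\ y_1'&x_1'\end{pmatrix}$, $C_2=\begin{pmatrix} x_2&y_2\\ y_2'&x_2'\end{pmatrix}\in M_2(K[X;Y])$, and let $F=K[C_1,C_2]$ be the unital $K$-subalgebra of $M_2(K[X;Y])$ generated by $C_1,C_2$ (this is the relatively free algebra of rank 2 of $M_{11}(E)$). *)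

(* Defs.v *)
From HB Require Import structures.
From mathcomp Require Import all_boot all_order all_algebra.
From mathcomp Require Import mpoly.
Set Implicit Arguments. Unset Strict Implicit. Unset Printing Implicit Defensive.
Import GRing.Theory.
Local Open Scope ring_scope.

(* K[X] with X = {x1, x2, x1', x2'} = 'X_0, 'X_1, 'X_2, 'X_3. *)
Definition Pol (K : fieldType) := {mpoly K[4]}.

(* The free supercommutative algebra K[X;Y] = K[X] (x) E(Y), Y = {y1,y2,y1',y2'}
   (odd generators 0,1,2,3), realised faithfully through its left regular
   representation on the free K[X]-module with basis the 16 Grassmann
   monomials y_S, S subset of {0,1,2,3}; the monomial y_S is indexed by the
   k : 'I_16 whose binary digits are the indicator of S. *)
Definition SC (K : fieldType) := 'M[Pol K]_16.

Definition inS (k : 'I_16) (i : 'I_4) : bool := odd (k %/ 2 ^ i).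

(* sign of y_i y_S = (-1)^#{j in S | j < i} y_{S u {i}} *)
Definition sgnY (K : fieldType) (S : 'I_16) (i : 'I_4) : Pol K :=
  (-1) ^+ #|[set j : 'I_4 | inS S j && (j < i)%N]|.

(* left multiplication by the odd generator y_i *)
Definition oddgen (K : fieldType) (i : 'I_4) : SC K :=
  \matrix_(T < 16, S < 16)
    if (~~ inS S i) && (val T == (val S + 2 ^ i)%N) then sgnY K S i else 0.

Definition evengen (K : fieldType) (i : 'I_4) : SC K := ('X_i : Pol K)%:M.

Definition mx2 (K : fieldType) (a b c d : SC K) : 'M[SC K]_2 :=
  \matrix_(i < 2, j < 2)
    if i == ord0 then (if j == ord0 then a else b) else (if j == ord0 then c else d).

Definition i0 : 'I_4 := @Ordinal 4 0 isT.
Definition i1 : 'I_4 := @Ordinal 4 1 isT.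
Definition i2 : 'I_4 := @Ordinal 4 2 isT.
Definition i3 : 'I_4 := @Ordinal 4 3 isT.

(* C1 = [[x1, y1], [y1', x1']],  C2 = [[x2, y2], [y2', x2']] *)
Definition C1 (K : fieldType) : 'M[SC K]_2 :=
  mx2 (evengen K i0) (oddgen K i0) (oddgen K i2) (evengen K i2).
Definition C2 (K : fieldType) : 'M[SC K]_2 :=
  mx2 (evengen K i1) (oddgen K i1) (oddgen K i3) (evengen K i3).

Definition scal (K : fieldType) (k : K) : 'M[SC K]_2 :=
  (((k%:MP : Pol K)%:M : SC K)%:M).

Inductive inF (K : fieldType) : 'M[SC K]_2 -> Prop :=
| F_scal (k : K) : inF (scal k)
| F_C1 : inF (C1 K)
| F_C2 : inF (C2 K)
| F_add A B : inF A -> inF B -> inF (A + B)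
| F_mul A B : inF A -> inF B -> inF (A * B).

(* Main.v *)
Require Import Defs.
From HB Require Import structures.
From mathcomp Require Import all_boot all_order all_algebra.
From mathcomp Require Import mpoly.
From mathcomp Require Import zify.
Set Implicit Arguments. Unset Strict Implicit. Unset Printing Implicit Defensive.
Import GRing.Theory.
Local Open Scope ring_scope.

Section S.
Variable K : fieldType.

Definition strict (k : nat) (M : SC K) :=
  forall T S : 'I_16, (T < S + k)%N -> M T S = 0.

Lemma strict_mul a b M N : strict a M -> strict b N -> strict (a + b) (M * N).
Proof.
move=> hM hN T S hTS; rewrite [M * N]/(GRing.mul _ _) /= mxE.
apply: big1 => U _.
case: (ltnP T (U + a)) => h; first by rewrite hM // mul0r.
by rewrite (hN U S) ?mulr0 //; lia.
Qed.

Lemma strict1 : strict 0 (1 : SC K).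
Proof.
move=> T S h; rewrite [1]/(GRing.one _) /= mxE.
have /negbTE -> : T != S by apply/eqP => e; move: h; rewrite e addn0 ltnn.
by [].
Qed.

Lemma strict_pow k M n : strict k M -> strict (k * n) (M ^+ n).
Proof.
move=> hM; elim: n => [|n IH]; first by rewrite muln0 expr0; exact: strict1.
by rewrite exprS mulnS; apply: strict_mul.
Qed.

Lemma strict16 M : strict 16 M -> M = 0.
Proof. move=> h; apply/matrixP => T S; rewrite mxE h //. exact: leq_trans (ltn_ord T) (leq_addl _ _). Qed.

Lemma oddgen_strict i : strict 1 (oddgen K i).
Proof.
move=> T S h; rewrite mxE; case: ifP => // /andP [_ /eqP hT].
have p : (0 < 2 ^ i)%N by rewrite expn_gt0. change (nat_of_ord T = S + 2 ^ i)%N in hT. lia.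
Qed.

Lemma Xneq0 (i : 'I_4) : ('X_i : Pol K) != 0.
Proof.
apply/eqP => h; have := congr1 (fun p : Pol K => p@_(U_(i))%MM) h.
by rewrite mcoeffX eqxx mcoeff0 => /eqP; rewrite oner_eq0.
Qed.

Lemma scalar_comm (a : Pol K) (Z : SC K) : (a%:M : SC K) * Z = Z * a%:M.
Proof. by rewrite -!mulmxE scalar_mxC. Qed.

Lemma reg_left (a : Pol K) (N Z : SC K) : a != 0 -> strict 1 N ->
  (a%:M - N) * Z = 0 -> Z = 0.
Proof.
move=> a0 sN h.
have e : forall n, (a ^+ n)%:M * Z = N ^+ n * Z.
  elim=> [|n IH]; first by rewrite !expr0.
  rewrite exprS scalar_mxM -mulrA IH mulrA scalar_comm -mulrA.
  have: a%:M * Z = N * Z by apply/eqP; rewrite -subr_eq0 -mulrBl h.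
  by move=> ->; rewrite mulrA -exprSr.
have := e 16%N; rewrite (strict16 (M:=N ^+ 16)); last by have := strict_pow (n:=16) sN; rewrite mul1n.
rewrite mul0r => h2; apply/matrixP => i j.
have := congr1 (fun M : SC K => M i j) h2.
rewrite -mulmxE mul_scalar_mx !mxE => /eqP.
by rewrite mulf_eq0 expf_eq0 (negbTE a0) andbF => /eqP.
Qed.

Lemma reg_right (a : Pol K) (N Z : SC K) : a != 0 -> strict 1 N ->
  Z * (a%:M - N) = 0 -> Z = 0.
Proof.
move=> a0 sN h.
have e : forall n, Z * (a ^+ n)%:M = Z * N ^+ n.
  elim=> [|n IH]; first by rewrite !expr0.
  rewrite exprSr scalar_mxM mulrA IH -mulrA -scalar_comm mulrA.
  have: Z * a%:M = Z * N by apply/eqP; rewrite -subr_eq0 -mulrBr h.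
  by move=> ->; rewrite -mulrA -exprS.
have := e 16%N; rewrite (strict16 (M:=N ^+ 16)); last by have := strict_pow (n:=16) sN; rewrite mul1n.
rewrite mulr0 -scalar_comm => h2; apply/matrixP => i j.
have := congr1 (fun M : SC K => M i j) h2.
rewrite -mulmxE mul_scalar_mx !mxE => /eqP.
by rewrite mulf_eq0 expf_eq0 (negbTE a0) andbF => /eqP.
Qed.

Lemma alg1 (x x' : Pol K) (y y' a0 a1 : SC K) :
  ((x' * x)%:M - y * y') * a0 =
  x'%:M * (x%:M * a0 + y * a1) - y * (y' * a0 + x'%:M * a1).
Proof.
rewrite scalar_mxM mulmxE !mulrDr !mulrBl !mulrA (scalar_comm x' y).
by rewrite opprD addrACA (subrr (y * x'%:M * a1)) addr0.
Qed.

Lemma alg2 (x x' : Pol K) (y y' a0 a1 : SC K) :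
  ((x * x')%:M - y' * y) * a1 =
  x%:M * (y' * a0 + x'%:M * a1) - y' * (x%:M * a0 + y * a1).
Proof.
rewrite scalar_mxM mulmxE !mulrDr !mulrBl !mulrA (scalar_comm x y').
by rewrite opprD addrACA (subrr (y' * x%:M * a0)) add0r.
Qed.

Lemma alg3 (x x' : Pol K) (y y' a0 a1 : SC K) :
  a0 * ((x * x')%:M - y * y') =
  (a0 * x%:M + a1 * y') * x'%:M - (a0 * y + a1 * x'%:M) * y'.
Proof.
rewrite scalar_mxM mulmxE !mulrDl !mulrBr !mulrA -!mulrA -(scalar_comm x' y').
by rewrite opprD addrACA (subrr (a1 * (x'%:M * y'))) addr0.
Qed.

Lemma alg4 (x x' : Pol K) (y y' a0 a1 : SC K) :
  a1 * ((x' * x)%:M - y' * y) =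
  (a0 * y + a1 * x'%:M) * x%:M - (a0 * x%:M + a1 * y') * y.
Proof.
rewrite scalar_mxM mulmxE !mulrDl !mulrBr !mulrA -!mulrA -(scalar_comm x y).
by rewrite opprD addrACA (subrr (a0 * (x%:M * y))) add0r.
Qed.

Lemma strict_weak k l M : (l <= k)%N -> strict k M -> strict l M.
Proof. by move=> hl hM T S h; apply: hM; apply: leq_trans h _; rewrite leq_add2l. Qed.

Lemma ord2 (i : 'I_2) : i = ord0 \/ i = ord_max.
Proof. by case: i => [[|[|//]] Hi]; [left|right]; apply: val_inj. Qed.

Lemma lift0E : lift ord0 ord0 = ord_max :> 'I_2.
Proof. exact: val_inj. Qed.

Lemma mx2_left (x x' : Pol K) (y y' : SC K) (A : 'M[SC K]_2) :
  x != 0 -> x' != 0 -> strict 1 y -> strict 1 y' ->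
  mx2 (x%:M) y y' (x'%:M) * A = 0 -> A = 0.
Proof.
move=> hx hx' hy hy' h.
have E i j : (mx2 (x%:M) y y' (x'%:M) * A) i j = 0 by rewrite h mxE.
have e0 j := E ord0 j; have e1 j := E ord_max j.
move: e0 e1; rewrite -mulmxE => e0 e1.
have g0 j : x%:M * A ord0 j + y * A ord_max j = 0.
  by move: (e0 j); rewrite mxE !big_ord_recl big_ord0 !mxE /= addr0 lift0E.
have g1 j : y' * A ord0 j + x'%:M * A ord_max j = 0.
  by move: (e1 j); rewrite mxE !big_ord_recl big_ord0 !mxE /= addr0 lift0E.
have sN : strict 1 (y * y') by apply: (strict_weak (k := 1 + 1)) => //; exact: strict_mul.
have sN' : strict 1 (y' * y) by apply: (strict_weak (k := 1 + 1)) => //; exact: strict_mul.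
have z0 j : A ord0 j = 0.
  apply: (reg_left (a := x' * x) _ sN); first by rewrite mulf_neq0.
  by rewrite (alg1 _ _ _ _ _ (A ord_max j)) g0 g1 !mulr0 subr0.
have z1 j : A ord_max j = 0.
  apply: (reg_left (a := x * x') _ sN'); first by rewrite mulf_neq0.
  by rewrite (alg2 _ _ _ _ (A ord0 j)) g0 g1 !mulr0 subr0.
apply/matrixP => i j; rewrite mxE; case: (ord2 i) => ->; [exact: z0|exact: z1].
Qed.

Lemma mx2_right (x x' : Pol K) (y y' : SC K) (A : 'M[SC K]_2) :
  x != 0 -> x' != 0 -> strict 1 y -> strict 1 y' ->
  A * mx2 (x%:M) y y' (x'%:M) = 0 -> A = 0.
Proof.
move=> hx hx' hy hy' h.
have E i j : (A * mx2 (x%:M) y y' (x'%:M)) i j = 0 by rewrite h mxE.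
have e0 i := E i ord0; have e1 i := E i ord_max.
move: e0 e1; rewrite -mulmxE => e0 e1.
have g0 i : A i ord0 * x%:M + A i ord_max * y' = 0.
  by move: (e0 i); rewrite mxE !big_ord_recl big_ord0 !mxE /= addr0 lift0E.
have g1 i : A i ord0 * y + A i ord_max * x'%:M = 0.
  by move: (e1 i); rewrite mxE !big_ord_recl big_ord0 !mxE /= addr0 lift0E.
have sN : strict 1 (y * y') by apply: (strict_weak (k := 1 + 1)) => //; exact: strict_mul.
have sN' : strict 1 (y' * y) by apply: (strict_weak (k := 1 + 1)) => //; exact: strict_mul.
have z0 i : A i ord0 = 0.
  apply: (reg_right (a := x * x') _ sN); first by rewrite mulf_neq0.
  by rewrite (alg3 _ _ _ _ _ (A i ord_max)) g0 g1 !mul0r subr0.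
have z1 i : A i ord_max = 0.
  apply: (reg_right (a := x' * x) _ sN'); first by rewrite mulf_neq0.
  by rewrite (alg4 _ _ _ _ (A i ord0)) g0 g1 !mul0r subr0.
apply/matrixP => i j; rewrite mxE; case: (ord2 j) => ->; [exact: z0|exact: z1].
Qed.
End S.

Theorem lemma2 (K : fieldType)
  (K_infinite : forall s : seq K, exists x : K, x \notin s)
  (K_char : 2%N \notin [pchar K])
  (A : 'M[SC K]_2) :
  inF A ->
  [/\ C1 K * A = 0 -> A = 0,
      A * C1 K = 0 -> A = 0,
      C2 K * A = 0 -> A = 0
    & A * C2 K = 0 -> A = 0].
Proof.
move=> _; rewrite /C1 /C2 /evengen.
split; [apply: mx2_left|apply: mx2_right|apply: mx2_left|apply: mx2_right];
  (apply: Xneq0 || apply: oddgen_strict).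
Qed.
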